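(* Let $G$ and $H$ be two nontrivial connected graphs. Then $hn_{cc}(G\circ H)=2$.
   Context: All graphs are finite, simple and undirected. For a graph $G$ and $S\subseteq V(G)$, the cycle interval $\langle S\rangle$ consists of the vertices of $S$ together with every vertex $w\in V(G)\setminus S$ such that $G[S\cup\{w\}]$ contains a cycle through $w$. $S$ is cycle convex if $\langle S\rangle=S$. The cycle convex hull $\langle S\rangle_C$ is the smallest cycle convex set containing $S$. A hull set is a set $S$ with $\langle S\rangle_C=V(G)$, and $hn_{cc}(G)$ is the minimum cardinality of a hull set. The lexicographic product $G\circ H$ has vertex set $V(G)\times V(H)$, with $(g_1,h_1)\sim(g_2,h_2)$ iff $g_1\sim g_2$ in $G$, or ($g_1=g_2$ and $h_1\sim h_2$ in $H$). A graph is nontrivial if it has at least two vertices. *)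

(* Defs.v *)
From mathcomp Require Import all_boot.
Set Implicit Arguments. Unset Strict Implicit. Unset Printing Implicit Defensive.

(* A finite simple graph: vertex set a finType T, adjacency e : rel T that is
   symmetric and irreflexive (these are hypotheses of the theorem). *)

Definition connected_graph (T : finType) (e : rel T) : Prop :=
  forall x y : T, connect e x y.

Definition is_graph_cycle (T : finType) (e : rel T) (c : seq T) : bool :=
  [&& uniq c, 3 <= size c & path.cycle e c].

Definition cycle_through_in (T : finType) (e : rel T) (X : {set T}) (w : T) : Prop :=
  exists c : seq T, [/\ is_graph_cycle e c, w \in c & all (fun v => v \in X) c].

Definition in_cycle_interval (T : finType) (e : rel T) (S : {set T}) (w : T) : Prop :=
  w \in S \/ (w \notin S /\ cycle_through_in e (w |: S) w).

Definition cycle_convex (T : finType) (e : rel T) (S : {set T}) : Prop :=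
  forall w, in_cycle_interval e S w -> w \in S.

Definition in_cycle_hull (T : finType) (e : rel T) (S : {set T}) (x : T) : Prop :=
  forall C : {set T}, cycle_convex e C -> S \subset C -> x \in C.

Definition cc_hull_set (T : finType) (e : rel T) (S : {set T}) : Prop :=
  forall x : T, in_cycle_hull e S x.

Definition is_cc_hull_number (T : finType) (e : rel T) (n : nat) : Prop :=
  (exists S : {set T}, cc_hull_set e S /\ #|S| = n) /\
  (forall S : {set T}, cc_hull_set e S -> n <= #|S|).

Definition lex_prod (T1 T2 : finType) (e1 : rel T1) (e2 : rel T2) : rel (T1 * T2) :=
  fun u v => e1 u.1 v.1 || ((u.1 == v.1) && e2 u.2 v.2).

(* Main.v *)
Require Import Defs.
From mathcomp Require Import all_boot.

Lemma exists_nbr (T : finType) (e : rel T) (con : connected_graph e)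
  (nt : 1 < #|T|) (x : T) : exists y, e x y.
Proof.
have : 0 < #|predC1 x| by rewrite cardC1; case: #|T| nt => [|[]].
case/card_gt0P => y; rewrite !inE => yx.
move: (con x y) => /connectP [[|z p] /= Hp Hl]; first by rewrite Hl eqxx in yx.
by exists z; case/andP: Hp.
Qed.

Lemma small_convex (T : finType) (e : rel T) (S : {set T}) :
  #|S| <= 1 -> cycle_convex e S.
Proof.
move=> HS w [//|[wS [c [Hc wc Hall]]]].
case/and3P: Hc => Hu H3 _.
have : size c <= size (enum (w |: S)).
  apply: uniq_leq_size => // v vc; rewrite mem_enum.
  by move/allP: Hall => /(_ v vc).
rewrite -cardE cardsU1 wS /=.
move=> H; have := leq_trans H3 H.
by rewrite ltnS => /leq_trans /(_ HS).
Qed.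

Lemma triangle (T : finType) (e : rel T) (sym : symmetric e) (irr : irreflexive e)
  (C : {set T}) (HC : cycle_convex e C) (x y w : T) :
  x \in C -> y \in C -> e x y -> e w x -> e w y -> w \in C.
Proof.
move=> xC yC exy ewx ewy; apply: HC.
case: (boolP (w \in C)) => wC; [by left | right; split => //].
have neq : forall u v, e u v -> u != v.
  by move=> u v; apply: contraTneq => ->; rewrite irr.
exists [:: w; x; y]; split.
- rewrite /is_graph_cycle /= !inE negb_or neq // neq // neq //= ewx exy.
  by rewrite sym ewy.
- by rewrite inE eqxx.
- by rewrite /= !inE eqxx xC yC !orbT.
Qed.

Theorem mainTheorem2 (TG TH : finType) (eG : rel TG) (eH : rel TH)
  (symG : symmetric eG) (irrG : irreflexive eG)
  (symH : symmetric eH) (irrH : irreflexive eH)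
  (ntG : 1 < #|TG|) (ntH : 1 < #|TH|)
  (conG : connected_graph eG) (conH : connected_graph eH) :
  is_cc_hull_number (lex_prod eG eH) 2.
Proof.
set E := lex_prod eG eH.
have symE : symmetric E.
  move=> u v; rewrite /E /lex_prod symG symH eq_sym //.
have irrE : irreflexive E.
  by move=> u; rewrite /E /lex_prod irrG irrH andbF.
split.
- have [g1 _] : exists g : TG, true.
    by case/card_gt0P: (ltnW ntG) => g _; exists g.
  have [a _] : exists h : TH, true.
    by case/card_gt0P: (ltnW ntH) => h _; exists h.
  have [b ab] := @exists_nbr _ _ conH ntH a.
  exists [set (g1, a); (g1, b)]; split; last first.
    rewrite cards2; case: eqP => // [[eab]].
    by rewrite eab irrH in ab.
  move=> [g h] C HC /subsetP SC.
  have step : forall g g', (g, a) \in C -> (g, b) \in C -> eG g g' ->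
      forall h, (g', h) \in C.
    move=> g0 g' Ha Hb Hg h0.
    apply: (@triangle _ E symE irrE C HC _ _ _ Ha Hb).
    + by rewrite /E /lex_prod /= eqxx ab orbT.
    + by rewrite /E /lex_prod /= symG Hg.
    + by rewrite /E /lex_prod /= symG Hg.
  have all_g : forall g, ((g, a) \in C) && ((g, b) \in C).
    move=> g0.
    have Hcl : closed eG [pred g | ((g, a) \in C) && ((g, b) \in C)].
      move=> u v Huv; rewrite /= .
      apply/idP/idP => /andP [Ha Hb].
      + by apply/andP; split; apply: (step u v).
      + by apply/andP; split; apply: (step v u) => //; rewrite symG.
    have := closed_connect Hcl (conG g1 g0); rewrite !inE /= => <-.
    by rewrite !SC // !inE eqxx ?orbT.
  have [g' gg'] := @exists_nbr _ _ conG ntG g.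
  case/andP: (all_g g') => Ha Hb.
  by apply: (step g' g) => //; rewrite symG.
- move=> S HS; rewrite leqNgt; apply/negP => Hlt.
  have HSc := @small_convex _ E S Hlt.
  have : #|[set: TG * TH]| <= #|S|.
    by apply: subset_leq_card; apply/subsetP => x _; exact: (HS x S HSc (subxx S)).
  rewrite cardsT card_prod => H.
  have : 2 <= #|TG| * #|TH|.
    by apply: leq_trans ntG _; apply: leq_pmulr; apply: ltnW.
  move=> H2; have := leq_trans H2 H.
  by move/(leq_trans)/(_ Hlt).
Qed.
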